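(* For every $n\in\mathbb N$, in the field $\mathbb Q(x)$ we have $$\frac{U_n}{U_{n+1}}=\left[0;2x-1,1,\underbrace{2(x-1),1,2(x-1),1,\dots,2(x-1),1}_{n\text{ copies of the pair }2(x-1),1}\right].$$
   Context: $U_n=U_n(x)$ denotes the Chebyshev polynomial of the second kind: $U_0=1$, $U_1=2x$, $U_{n+1}=2xU_n-U_{n-1}$ for $n\ge1$. For elements $a_0,a_1,\dots,a_m$ the finite continued fraction is $[a_0;a_1,\dots,a_m]=a_0+\cfrac{1}{a_1+\cfrac{1}{\ddots+\cfrac{1}{a_m}}}$. *)

(* Defs.v *)
From HB Require Import structures.
From mathcomp Require Import all_boot all_order all_algebra.
Set Implicit Arguments. Unset Strict Implicit. Unset Printing Implicit Defensive.
Import Order.TTheory GRing.Theory Num.Theory.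
Local Open Scope ring_scope.

(* Chebyshev polynomials of the second kind over a ring R:
   chebU_pair n = (U_n, U_{n+1}), with U_0 = 1, U_1 = 2x, U_{n+1} = 2x U_n - U_{n-1}. *)
Fixpoint chebU_pair (R : nzRingType) (n : nat) : {poly R} * {poly R} :=
  match n with
  | 0%N => (1, 2%:R *: 'X)
  | m.+1 => let: (a, b) := chebU_pair R m in (b, 2%:R *: 'X * b - a)
  end.

Definition chebU (R : nzRingType) (n : nat) : {poly R} := (chebU_pair R n).1.

Definition Qx : fieldType := {fraction {poly rat}}.
Definition toQx (p : {poly rat}) : Qx := FracField.tofrac p.
Definition xQ : Qx := toQx 'X.

(* Finite continued fraction [a_0; a_1, ..., a_m] = a_0 + 1/(a_1 + 1/(... + 1/a_m)),
   for a nonempty list [:: a_0; ...; a_m] (the empty list is given value 0). *)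
Fixpoint contfrac (F : fieldType) (s : seq F) : F :=
  match s with
  | [::] => 0
  | [:: a] => a
  | a :: s' => a + (contfrac s')^-1
  end.

(* Main.v *)
Require Import Defs.
From HB Require Import structures.
From mathcomp Require Import all_boot all_order all_algebra.
From mathcomp Require Import ring zify.
Import GRing.Theory Num.Theory.
Local Open Scope ring_scope.

Definition A n := (chebU_pair rat n).1.
Definition B n := (chebU_pair rat n).2.

Lemma pairS n : chebU_pair rat n.+1 = (B n, 2%:R *: 'X * B n - A n).
Proof. rewrite /A /B /=; by case: (chebU_pair rat n). Qed.

Lemma AS n : A n.+1 = B n.
Proof. by rewrite /A pairS. Qed.
Lemma BS n : B n.+1 = 2%:R *: 'X * B n - A n.
Proof. by rewrite {1}/B pairS. Qed.

Lemma eval1 n : (A n).[1] = n.+1%:R /\ (B n).[1] = n.+2%:R.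
Proof.
elim: n => [|n [IHa IHb]].
  by rewrite /A /B /= !hornerE; split => //; rewrite -natrM.
rewrite AS BS; split => //.
rewrite !hornerE IHa IHb.
rewrite -!natrM -natrB; last by lia.
congr (_%:R); lia.
Qed.

Lemma toQxX (p : {poly rat}) : toQx (2%:R *: 'X * p) = 2%:R * xQ * toQx p.
Proof.
rewrite /toQx /xQ scaler_nat mulrnAl tofracM tofracMn.
by rewrite mul1r.
Qed.

Lemma toQxD p q : toQx (p + q) = toQx p + toQx q.
Proof. exact: tofracD. Qed.
Lemma toQxB p q : toQx (p - q) = toQx p - toQx q.
Proof. exact: tofracB. Qed.

Lemma nzA n : toQx (A n) != 0.
Proof.
rewrite /toQx tofrac_eq0; apply/eqP => h.
have := (eval1 n).1; rewrite h horner0 => /eqP; by rewrite eq_sym pnatr_eq0.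
Qed.

Lemma nzD n : toQx (B n) - (2%:R * xQ - 1) * toQx (A n) != 0.
Proof.
have -> : toQx (B n) - (2%:R * xQ - 1) * toQx (A n) =
   toQx (B n - 2%:R *: 'X * A n + A n).
  rewrite toQxD toQxB toQxX; ring.
rewrite /toQx tofrac_eq0; apply/eqP => h.
have := eval1 n; rewrite -[_.[1]]/(_) => -[ha hb].
have : (B n - 2%:R *: 'X * A n + A n).[1] = 1.
  rewrite !hornerE ha hb.
  rewrite -!natr1; ring.
by rewrite h horner0 => /eqP; rewrite eq_sym oner_eq0.
Qed.

Lemma contfrac_cons2 (a b : Qx) s : contfrac (a :: b :: s) = a + (contfrac (b :: s))^-1.
Proof. by []. Qed.

Lemma L1 (F : fieldType) (x a b : F) : a != 0 ->
  2%:R * x * b - a - (2%:R * x - 1) * b != 0 ->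
  b - (2%:R * x - 1) * a != 0 ->
  1 + (2%:R * (x - 1) + (a / (b - (2%:R * x - 1) * a))^-1)^-1 =
  b / (2%:R * x * b - a - (2%:R * x - 1) * b).
Proof.
move=> hA hBA hD.
have E : 2%:R * x * b - a - (2%:R * x - 1) * b = b - a by ring.
rewrite E in hBA *; rewrite invf_div.
have -> : 2%:R * (x - 1) + (b - (2%:R * x - 1) * a) / a = (b - a) / a by field.
rewrite invf_div; field; done.
Qed.
Lemma L2 (F : fieldType) (x a b : F) : a != 0 -> b - (2%:R * x - 1) * a != 0 ->
  (2%:R * x - 1 + (a / (b - (2%:R * x - 1) * a))^-1)^-1 = a / b.
Proof.
move=> hA hD; rewrite invf_div.
have -> : 2%:R * x - 1 + (b - (2%:R * x - 1) * a) / a = b / a by field.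
by rewrite invf_div.
Qed.

Definition tl n := flatten (nseq n [:: 2%:R * (xQ - 1); 1]).

Lemma key n : contfrac (1 :: tl n) =
  toQx (A n) / (toQx (B n) - (2%:R * xQ - 1) * toQx (A n)).
Proof.
elim: n => [|n IH].
  rewrite /= /A /B /=.
  have -> : toQx (2%:R *: 'X) = 2%:R * xQ.
    by rewrite -[2%:R *: 'X]mulr1 toQxX /toQx tofrac1 mulr1.
  rewrite /toQx tofrac1.
  have -> : 2%:R * xQ - (2%:R * xQ - 1) * 1 = 1 :> Qx by ring.
  by rewrite divr1.
have hD := nzD n.+1; have hA := nzA n; have hd := nzD n.
rewrite AS BS toQxB toQxX.
have -> : tl n.+1 = 2%:R * (xQ - 1) :: 1 :: tl n by [].
rewrite !contfrac_cons2 IH.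
rewrite AS BS toQxB toQxX in hD.
exact: (@L1 _ _ _ _ hA hD hd).
Qed.

Theorem theorem1p4 (n : nat) :
  toQx (chebU rat n) / toQx (chebU rat n.+1) =
  contfrac ([:: 0; 2%:R * xQ - 1; 1]
            ++ flatten (nseq n [:: 2%:R * (xQ - 1); 1])).
Proof.
rewrite -/(tl n) /= -/(contfrac (1 :: tl n)) key /chebU.
have -> : (chebU_pair rat n.+1).1 = B n by rewrite pairS.
rewrite -/(A n) add0r.
symmetry; exact: (@L2 _ _ _ _ (nzA n) (nzD n)).
Qed.
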